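(* Fix $d\geq3$ and let $T$ be a subset of $\mathbb{N}_0^d$ whose affine span has dimension $2$. Then the $2$-completion $E_2^\infty(T)$ of $T$ equals $\Lambda(T)\cap\mathbb{N}_0^d$.
   Context: $\mathbb{N}_0=\{0,1,2,\dots\}$. For nonempty $\Gamma\subseteq\mathbb{N}_0^d$, $\Lambda(\Gamma)$ is the coset in $\mathbb{Z}^d$ generated by $\Gamma$ (smallest coset of a subgroup of $\mathbb{Z}^d$ containing $\Gamma$); each $\lambda\in\Lambda(\Gamma)$ can be written $\lambda=\gamma+\sum_{\alpha\in\Gamma,\alpha\neq\gamma}m_{\gamma,\alpha}(\alpha-\gamma)$ with $\gamma\in\Gamma$ and integers $m_{\gamma,\alpha}$, finitely many nonzero. $d(\Gamma,\lambda)$ is the infimum over all such representations of $\max\big(\sum_{m_{\gamma,\alpha}>0}m_{\gamma,\alpha},-\sum_{m_{\gamma,\alpha}<0}m_{\gamma,\alpha}\big)$, and $E_n(\Gamma)=\{\lambda\in\Lambda(\Gamma)\cap\mathbb{N}_0^d:d(\Gamma,\lambda)\leq n\}$. Set $E_n^1(T)=E_n(T)$, $E_n^{k+1}(T)=E_n(E_n^k(T))$, and the $n$-completion $E_n^\infty(T)=\bigcup_{k\geq1}E_n^k(T)$. *)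

(* Defs.v *)
From HB Require Import structures.
From mathcomp Require Import all_boot all_order all_algebra.
Set Implicit Arguments. Unset Strict Implicit. Unset Printing Implicit Defensive.
Import Order.TTheory GRing.Theory Num.Theory.
Local Open Scope ring_scope.

Definition vec (d : nat) := 'rV[int]_d.

Definition nonneg d (l : vec d) : Prop := forall i, 0 <= l 0 i.

(* l = g + sum_{a in s} m_a (a - g), with g in G, s a duplicate-free list of
   elements of G different from g (the finitely many alpha with possibly
   nonzero coefficient). *)
Definition rep d (G : vec d -> Prop) (l g : vec d) (s : seq (vec d))
    (m : vec d -> int) : Prop :=
  [/\ G g, uniq s, (forall a, a \in s -> G a /\ a != g)
    & l = g + \sum_(a <- s) m a *: (a - g)].

Definition Lambda d (G : vec d -> Prop) (l : vec d) : Prop :=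
  exists g s m, rep G l g s m.

Definition cost d (s : seq (vec d)) (m : vec d -> int) : int :=
  Num.max (\sum_(a <- s) Num.max (m a) 0) (\sum_(a <- s) Num.max (- m a) 0).

(* d(G, l) <= n  (the infimum over a set of naturals is <= n iff it is
   attained by some representation of cost <= n) *)
Definition dist_le d (G : vec d -> Prop) (l : vec d) (n : nat) : Prop :=
  exists g s m, rep G l g s m /\ cost s m <= n%:Z.

Definition E d (n : nat) (G : vec d -> Prop) : vec d -> Prop :=
  fun l => [/\ Lambda G l, nonneg l & dist_le G l n].

Definition Einf d (n : nat) (T : vec d -> Prop) : vec d -> Prop :=
  fun l => exists k, (0 < k)%N /\ iter k (E n) T l.

Definition ratv d (v : vec d) : 'rV[rat]_d := map_mx (intr : int -> rat) v.

(* the affine span of T (in Q^d, equivalently R^d) has dimension 2: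
   there are c, a, b in T with a-c, b-c linearly independent and every
   x - c (x in T) lies in their span. *)
Definition affdim2 d (T : vec d -> Prop) : Prop :=
  exists c a b, [/\ T c, T a, T b,
    \rank (col_mx (ratv a - ratv c) (ratv b - ratv c)) = 2%N
    & forall x, T x -> (ratv x - ratv c <= col_mx (ratv a - ratv c) (ratv b - ratv c))%MS].

(* Submission.v *)
Require Import Defs.
From mathcomp Require Import all_boot all_order all_algebra.
From mathcomp Require Import ring lra zify.
From Stdlib Require Import Classical.
Set Implicit Arguments. Unset Strict Implicit. Unset Printing Implicit Defensive.
Import Order.TTheory GRing.Theory Num.Theory.
Local Open Scope ring_scope.

Section Basic.
Variable d : nat.
Implicit Types (G H : vec d -> Prop).

Lemma E_incl n G x : G x -> nonneg x -> E n G x.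
Proof.
move=> Gx nx; have r0 : rep G x x [::] (fun _ => 0).
  by split=> //; rewrite big_nil addr0.
split=> //; first by exists x, [::], (fun _ => 0).
exists x, [::], (fun _ => 0); split=> //.
rewrite /cost !big_nil; lia.
Qed.

Lemma rep_mono G H l g s m : (forall x, G x -> H x) -> rep G l g s m -> rep H l g s m.
Proof. by move=> GH [Gg us Hs El]; split=> // [|a /Hs [/GH]]; [exact: GH|]. Qed.

Lemma E_mono n G H x : (forall x, G x -> H x) -> E n G x -> E n H x.
Proof.
move=> GH [[g [s [m R]]] nx [g' [s' [m' [R' C]]]]]; split=> //.
  by exists g, s, m; exact: rep_mono R.
by exists g', s', m'; split=> //; exact: rep_mono R'.
Qed.

Lemma normalize G g (l : seq (vec d * int)) : G g -> (forall z, z \in l -> G z.1) ->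
  exists s (m : vec d -> int), [/\ uniq s, (forall a, a \in s -> G a /\ a != g),
     \sum_(a <- s) m a *: (a - g) = \sum_(z <- l) z.2 *: (z.1 - g),
     \sum_(a <- s) Num.max (m a) 0 <= \sum_(z <- l) Num.max z.2 0 &
     \sum_(a <- s) Num.max (- m a) 0 <= \sum_(z <- l) Num.max (- z.2) 0].
Proof.
move=> Gg; elim: l => [|[a k] l IH] Hl.
  by exists [::], (fun _ => 0); rewrite !big_nil.
have [|s [m [us Hs Esum Hp Hn]]] := IH.
  by move=> z zl; apply: Hl; rewrite inE zl orbT.
have Ga : G a by apply: (Hl (a, k)); rewrite mem_head.
rewrite !big_cons /=.
case: (eqVneq a g) => [->|ag].
  exists s, m; split=> //; first by rewrite subrr scaler0 add0r.
    by apply: (le_trans Hp); rewrite lerDr le_max lexx orbT.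
  by apply: (le_trans Hn); rewrite lerDr le_max lexx orbT.
case: (boolP (a \in s)) => [as_|nas].
  exists s, (fun z => if z == a then m a + k else m z); split=> //.
  - rewrite (bigD1_seq a) //= eqxx -Esum (bigD1_seq a) //=.
    have -> : \sum_(z <- s | z != a) (if z == a then m a + k else m z) *: (z - g)
       = \sum_(z <- s | z != a) m z *: (z - g) by apply: eq_bigr => z /negbTE ->.
    by rewrite scalerDl -!addrA addrCA.
  - rewrite (bigD1_seq a) //= eqxx.
    have -> : \sum_(z <- s | z != a) Num.max (if z == a then m a + k else m z) 0
       = \sum_(z <- s | z != a) Num.max (m z) 0 by apply: eq_bigr => z /negbTE ->.
    rewrite (bigD1_seq a) //= in Hp.
    have h : Num.max (m a + k) 0 <= Num.max (m a) 0 + Num.max k 0 by lia.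
    apply: (le_trans (lerD h (lexx _))).
    by rewrite (addrC (Num.max (m a) 0)) -addrA lerD2l.
  - rewrite (bigD1_seq a) //= eqxx.
    have -> : \sum_(z <- s | z != a) Num.max (- (if z == a then m a + k else m z)) 0
       = \sum_(z <- s | z != a) Num.max (- m z) 0 by apply: eq_bigr => z /negbTE ->.
    rewrite (bigD1_seq a) //= in Hn.
    have h : Num.max (- (m a + k)) 0 <= Num.max (- m a) 0 + Num.max (- k) 0 by lia.
    apply: (le_trans (lerD h (lexx _))).
    by rewrite (addrC (Num.max (- m a) 0)) -addrA lerD2l.
exists (a :: s), (fun z => if z == a then k else m z); split.
- by rewrite /= nas.
- move=> z; rewrite inE => /orP [/eqP -> //|]; exact: Hs.
- rewrite big_cons eqxx -Esum; congr (_ + _); apply: eq_big_seq => z zs.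
  by have /negbTE -> : z != a by apply: contraNneq nas => <-.
- rewrite big_cons eqxx.
  have -> : \sum_(z <- s) Num.max (if z == a then k else m z) 0 = \sum_(z <- s) Num.max (m z) 0.
    apply: eq_big_seq => z zs.
    by have /negbTE -> : z != a by apply: contraNneq nas => <-.
  by rewrite lerD2l.
- rewrite big_cons eqxx.
  have -> : \sum_(z <- s) Num.max (- (if z == a then k else m z)) 0 = \sum_(z <- s) Num.max (- m z) 0.
    apply: eq_big_seq => z zs.
    by have /negbTE -> : z != a by apply: contraNneq nas => <-.
  by rewrite lerD2l.
Qed.

Lemma nonneg_comb (k : int) (c : seq (vec d * int)) y : 0 < k ->
  (forall z, z \in c -> 0 <= z.2 /\ nonneg z.1) ->
  k *: y = \sum_(z <- c) z.2 *: z.1 -> nonneg y.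
Proof.
move=> k0 Hc Ey i.
have : 0 <= (k *: y) 0 i.
  rewrite Ey summxE big_seq; apply: sumr_ge0 => z zc.
  have [h1 h2] := Hc z zc; rewrite mxE; exact: mulr_ge0.
by rewrite mxE pmulr_rge0.
Qed.

Section WithT.
Variable T : vec d -> Prop.
Hypothesis HT : forall x, T x -> nonneg x.

Definition It k := iter k (E 2) T.

Lemma It_nonneg k x : It k x -> nonneg x.
Proof. by case: k => [|k] /=; [apply: HT | case]. Qed.

Lemma It_succ k x : It k x -> It k.+1 x.
Proof.
elim: k x => [|k IH] x /=; first by move=> Tx; apply: E_incl => //; exact: HT.
by move=> Ex; apply: E_mono Ex; exact: IH.
Qed.

Lemma It_le k k' x : (k <= k')%N -> It k x -> It k' x.
Proof.
move=> /subnK <-; elim: (k' - k)%N => [|j IH] // H; rewrite addSn; apply: It_succ; exact: IH.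
Qed.

Definition S x := exists k, It k x.

Lemma S_nonneg x : S x -> nonneg x.
Proof. by case=> k; apply: It_nonneg. Qed.

Lemma S_T x : T x -> S x.
Proof. by exists 0%N. Qed.

Lemma S_list (l : seq (vec d)) : (forall a, a \in l -> S a) ->
  exists K, forall a, a \in l -> It K a.
Proof.
elim: l => [|a l IH] H; first by exists 0%N.
have [|K HK] := IH; first by move=> b bl; apply: H; rewrite inE bl orbT.
have [k Hk] := H a (mem_head _ _).
exists (maxn K k) => b; rewrite inE => /orP [/eqP -> | bl].
  by apply: It_le Hk; rewrite leq_maxr.
by apply: It_le (HK b bl); rewrite leq_maxl.
Qed.

Lemma move_S g (l : seq (vec d * int)) y : S g -> (forall z, z \in l -> S z.1) ->
  y = g + \sum_(z <- l) z.2 *: (z.1 - g) ->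
  \sum_(z <- l) Num.max z.2 0 <= 2 -> \sum_(z <- l) Num.max (- z.2) 0 <= 2 ->
  nonneg y -> S y.
Proof.
move=> Sg Sl Ey Hp Hn ny.
have [|K HK] := @S_list (g :: map fst l).
  move=> a; rewrite inE => /orP [/eqP -> // | /mapP [z zl ->]]; exact: Sl.
have [|s [m [us Hs Es Hp' Hn']]] := @normalize (It K) g l (HK g (mem_head _ _)).
  by move=> z zl; apply: HK; rewrite inE map_f ?orbT.
exists K.+1; rewrite /It /=.
have R : rep (It K) y g s m.
  split=> //; [exact: HK (mem_head _ _) | by rewrite Ey -Es].
split=> //; first by exists g, s, m.
exists g, s, m; split=> //; rewrite /cost ge_max; apply/andP; split; [exact: le_trans Hp' Hp | exact: le_trans Hn' Hn].
Qed.

End WithT.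
End Basic.

Lemma inl3 (A : eqType) (x y z w : A) : w \in [:: x; y; z] -> w = x \/ w = y \/ w = z.
Proof. by rewrite !inE => /or3P [/eqP|/eqP|/eqP]; auto. Qed.
Lemma inl2 (A : eqType) (x y w : A) : w \in [:: x; y] -> w = x \/ w = y.
Proof. by rewrite !inE => /orP [/eqP|/eqP]; auto. Qed.
Lemma inl1 (A : eqType) (x w : A) : w \in [:: x] -> w = x.
Proof. by rewrite !inE => /eqP. Qed.

Definition bnd (D n a b c : int) :=
  a <= n /\ b <= n /\ c <= n /\ D - a <= n /\ D - b <= n /\ D - c <= n.

Section ML.
Variable d : nat.
Variable T : vec d -> Prop.
Hypothesis HT : forall x, T x -> nonneg x.
Local Notation S := (S T).

Definition MLP (n : nat) := forall p q r (a b c : int) (x : vec d), S p -> S q -> S r ->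
  a + b + c = 1 -> bnd 1 n%:Z a b c -> x = a *: p + b *: q + c *: r -> nonneg x -> S x.

Lemma PA n : MLP n -> forall p q r (a b c : int) x, S p -> S q -> S r ->
  a + b + c = 1 -> bnd 1 n.+1%:Z a b c -> a < 0 -> 0 <= b -> 0 <= c ->
  x = a *: p + b *: q + c *: r -> nonneg x -> S x.
Proof.
move=> IH p q r a b c x Sp Sq Sr sum B a0 b0 c0 Ex nx; rewrite /bnd in B.
have [b' [c' [b'0 [c'0 [bc [kb kc]]]]]] : exists b' c' : int,
    0 <= b' /\ 0 <= c' /\ b' + c' = 2 /\ b <= (- a) * b' /\ c <= (- a) * c'.
  case: (lerP b (- a)) => hb; case: (lerP c (- a)) => hc.
  - by exists 1, 1; rewrite !mulr1; lia.
  - by exists 0, 2; rewrite mulr0; lia.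
  - by exists 2, 0; rewrite mulr0; lia.
  - lia.
have ec : c' = 2 - b' by lia.
pose y := p + b' *: (q - p) + c' *: (r - p).
have nq := S_nonneg HT Sq; have nr := S_nonneg HT Sr.
have ny : nonneg y.
  apply: (@nonneg_comb _ (- a) [:: (x, 1); (q, (- a) * b' - b); (r, (- a) * c' - c)]).
  - lia.
  - by move=> z /inl3 [->|[->|->]] /=; split=> //; lia.
  rewrite !big_cons big_nil /y Ex ec; apply/matrixP => i j; rewrite !mxE /=; ring.
have Sy : S y.
  apply: (@move_S _ _ HT p [:: (q, b'); (r, c')]) => //.
  - by move=> z /inl2 [->|->].
  - by rewrite !big_cons big_nil addr0 addrA.
  - rewrite !big_cons big_nil /=; lia.
  - rewrite !big_cons big_nil /=; lia.
have e : (- a) * b' + (- a) * c' = (- a) * 2 by rewrite -mulrDr bc.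
apply: (IH y q r (- a) (b - (- a) * b') (c - (- a) * c')) => //.
- lia.
- rewrite /bnd; lia.
- rewrite /y Ex ec; apply/matrixP => i j; rewrite !mxE /=; ring.
Qed.

Lemma PB1 n : MLP n -> forall p q r (a b c : int) x, S p -> S q -> S r ->
  a + b + c = 1 -> bnd 1 n.+1%:Z a b c -> b < 0 -> c < 0 -> - c + 1 <= - b ->
  x = a *: p + b *: q + c *: r -> nonneg x -> S x.
Proof.
move=> IH p q r a b c x Sp Sq Sr sum B b0 c0 bc Ex nx; rewrite /bnd in B.
pose y := p + (-1) *: (q - p).
have nq := S_nonneg HT Sq; have nr := S_nonneg HT Sr.
have ny : nonneg y.
  apply: (@nonneg_comb _ a [:: (q, 2 * (- b) - a); (r, 2 * (- c)); (x, 2)]).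
  - lia.
  - by move=> z /inl3 [->|[->|->]] /=; split=> //; lia.
  rewrite !big_cons big_nil /y Ex; apply/matrixP => i j; rewrite !mxE /=; ring.
have Sy : S y.
  apply: (@move_S _ _ HT p [:: (q, -1)]) => //.
  - by move=> z /inl1 ->.
  - by rewrite !big_cons big_nil addr0.
  - rewrite !big_cons big_nil /=; lia.
  - rewrite !big_cons big_nil /=; lia.
apply: (IH p y r (a + 2 * b) (- b) c) => //.
- lia.
- rewrite /bnd; lia.
- rewrite /y Ex; apply/matrixP => i j; rewrite !mxE /=; ring.
Qed.

Lemma PB3 n : MLP n -> forall p q r (a b c : int) x, S p -> S q -> S r ->
  a + b + c = 1 -> bnd 1 n.+1%:Z a b c -> b < 0 -> c = b ->
  x = a *: p + b *: q + c *: r -> nonneg x -> S x.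
Proof.
move=> IH p q r a b c x Sp Sq Sr sum B b0 cb Ex nx; rewrite /bnd in B.
have ea : a = 1 - 2 * b by lia.
pose z := p + (-1) *: (q - p) + (-1) *: (r - p).
have np := S_nonneg HT Sp.
have nz : nonneg z.
  apply: (@nonneg_comb _ (- b) [:: (p, - b - 1); (x, 1)]).
  - lia.
  - by move=> w /inl2 [->|->] /=; split=> //; lia.
  rewrite !big_cons big_nil /z Ex cb ea; apply/matrixP => i j; rewrite !mxE /=; ring.
have Sz : S z.
  apply: (@move_S _ _ HT p [:: (q, -1); (r, -1)]) => //.
  - by move=> w /inl2 [->|->].
  - by rewrite !big_cons big_nil addr0 addrA.
  - rewrite !big_cons big_nil /=; lia.
  - rewrite !big_cons big_nil /=; lia.
apply: (IH p q z (1 + b) 0 (- b)) => //.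
- lia.
- rewrite /bnd; lia.
- rewrite /z Ex cb ea; apply/matrixP => i j; rewrite !mxE /=; ring.
Qed.

Lemma PB n : MLP n -> forall p q r (a b c : int) x, S p -> S q -> S r ->
  a + b + c = 1 -> bnd 1 n.+1%:Z a b c -> b < 0 -> c < 0 ->
  x = a *: p + b *: q + c *: r -> nonneg x -> S x.
Proof.
move=> IH p q r a b c x Sp Sq Sr sum B b0 c0 Ex nx.
case: (lerP (- c + 1) (- b)) => h1; first exact: (PB1 IH Sp Sq Sr sum B b0 c0 h1 Ex nx).
case: (lerP (- b + 1) (- c)) => h2.
  apply: (PB1 IH Sp Sr Sq (a := a) (b := c) (c := b)) => //.
  - lia.
  - move: B; rewrite /bnd; lia.
  - rewrite Ex; apply/matrixP => i j; rewrite !mxE /=; ring.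
have cb : c = b by lia.
exact: (PB3 IH Sp Sq Sr sum B b0 cb Ex nx).
Qed.

Lemma ML n : MLP n.
Proof.
elim: n => [|n IH] p q r a b c x Sp Sq Sr sum B Ex nx.
  by move: B; rewrite /bnd; lia.
case: (ltrP a 0) => a0; case: (ltrP b 0) => b0; case: (ltrP c 0) => c0.
- lia.
- apply: (PB IH Sr Sp Sq (a := c) (b := a) (c := b)) => //.
  + lia.
  + move: B; rewrite /bnd; lia.
  + rewrite Ex; apply/matrixP => i j; rewrite !mxE /=; ring.
- apply: (PB IH Sq Sp Sr (a := b) (b := a) (c := c)) => //.
  + lia.
  + move: B; rewrite /bnd; lia.
  + rewrite Ex; apply/matrixP => i j; rewrite !mxE /=; ring.
- exact: (PA IH Sp Sq Sr sum B a0 b0 c0 Ex nx).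
- exact: (PB IH Sp Sq Sr sum B b0 c0 Ex nx).
- apply: (PA IH Sq Sp Sr (a := b) (b := a) (c := c)) => //.
  + lia.
  + move: B; rewrite /bnd; lia.
  + rewrite Ex; apply/matrixP => i j; rewrite !mxE /=; ring.
- apply: (PA IH Sr Sp Sq (a := c) (b := a) (c := b)) => //.
  + lia.
  + move: B; rewrite /bnd; lia.
  + rewrite Ex; apply/matrixP => i j; rewrite !mxE /=; ring.
have [[ea [eb ec]]|[[ea [eb ec]]|[ea [eb ec]]]] :
   (a = 1 /\ b = 0 /\ c = 0) \/ (a = 0 /\ b = 1 /\ c = 0) \/ (a = 0 /\ b = 0 /\ c = 1) by lia.
- by rewrite Ex ea eb ec scale1r !scale0r !addr0.
- by rewrite Ex ea eb ec scale1r !scale0r addr0 add0r.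
- by rewrite Ex ea eb ec scale1r !scale0r !add0r.
Qed.

End ML.

Definition det d (i0 j0 : 'I_d) (p q r : vec d) : int :=
  (q 0 i0 - p 0 i0) * (r 0 j0 - p 0 j0) - (q 0 j0 - p 0 j0) * (r 0 i0 - p 0 i0).

Lemma det_comb d (i0 j0 : 'I_d) (p q r t : vec d) (D A B G : int) :
  D *: t = A *: p + B *: q + G *: r -> A + B + G = D -> D != 0 ->
  D * det i0 j0 t q r = A * det i0 j0 p q r.
Proof.
move=> Et sum Dn.
have Ei := congr1 (fun M : vec d => M 0 i0) Et.
have Ej := congr1 (fun M : vec d => M 0 j0) Et.
rewrite /= !mxE in Ei Ej.
apply: (mulfI Dn).
have -> : D * (D * det i0 j0 t q r) =
   (D * q 0 i0 - D * t 0 i0) * (D * r 0 j0 - D * t 0 j0)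
   - (D * q 0 j0 - D * t 0 j0) * (D * r 0 i0 - D * t 0 i0) by rewrite /det; ring.
rewrite Ei Ej /det -sum; ring.
Qed.

Lemma det_abs12 d (i0 j0 : 'I_d) p q r : `|det i0 j0 q p r|%N = `|det i0 j0 p q r|%N.
Proof. have -> : det i0 j0 q p r = - det i0 j0 p q r by rewrite /det; ring. by rewrite abszN. Qed.
Lemma det_abs23 d (i0 j0 : 'I_d) p q r : `|det i0 j0 p r q|%N = `|det i0 j0 p q r|%N.
Proof. have -> : det i0 j0 p r q = - det i0 j0 p q r by rewrite /det; ring. by rewrite abszN. Qed.
Lemma det_abs13 d (i0 j0 : 'I_d) p q r : `|det i0 j0 r q p|%N = `|det i0 j0 p q r|%N.
Proof. have -> : det i0 j0 r q p = - det i0 j0 p q r by rewrite /det; ring. by rewrite abszN. Qed.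
Lemma det_abs312 d (i0 j0 : 'I_d) p q r : `|det i0 j0 r p q|%N = `|det i0 j0 p q r|%N.
Proof. have -> : det i0 j0 r p q = det i0 j0 p q r by rewrite /det; ring. by []. Qed.

Section SA.
Variable d : nat.
Variable T : vec d -> Prop.
Hypothesis HT : forall x, T x -> nonneg x.
Local Notation S := (S T).
Variables (i0 j0 : 'I_d) (Dmin : nat).
Hypothesis Dpos : (0 < Dmin)%N.
Hypothesis Hmin : forall p q r, S p -> S q -> S r -> det i0 j0 p q r != 0 ->
  (Dmin <= `|det i0 j0 p q r|)%N.
Local Notation det := (det i0 j0).
Local Notation D := (Dmin%:Z).

Lemma Dnz : D != 0. Proof. lia. Qed.

Definition SAP (n : nat) := forall p q r t (A B G : int), S p -> S q -> S r -> S t ->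
  `|det p q r|%N = Dmin -> A + B + G = D -> bnd D n%:Z A B G ->
  D *: t = A *: p + B *: q + G *: r ->
  exists a b c : int, a + b + c = 1 /\ t = a *: p + b *: q + c *: r.

Lemma small p q r t (A B G : int) : S p -> S q -> S r -> S t -> `|det p q r|%N = Dmin ->
  A + B + G = D -> D *: t = A *: p + B *: q + G *: r -> A <> 0 -> - D < A -> A < D -> False.
Proof.
move=> Sp Sq Sr St hd sum Et A0 A1 A2.
have h := det_comb i0 j0 Et sum Dnz.
have [eY|eY] : det p q r = D \/ det p q r = - D by lia.
- rewrite eY mulrC in h; have hX := mulIf Dnz h.
  have := Hmin St Sq Sr; rewrite hX; move=> H; have A0' : A != 0 by apply/eqP.
  have := H A0'; lia.
- rewrite eY mulrN -mulNr mulrC in h; have hX := mulIf Dnz h.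
  have A0' : - A != 0 by rewrite oppr_eq0; apply/eqP.
  have := Hmin St Sq Sr; rewrite hX; move=> H; have := H A0'; lia.
Qed.

Lemma entry (t u : vec d) : t = u -> forall i j, t i j = u i j.
Proof. by move=> ->. Qed.

Lemma SPA n : SAP n -> forall p q r t (A B G : int), S p -> S q -> S r -> S t ->
  `|det p q r|%N = Dmin -> A + B + G = D -> bnd D n.+1%:Z A B G ->
  D *: t = A *: p + B *: q + G *: r -> A <= - D -> 0 <= B -> 0 <= G ->
  (B = 0 \/ D <= B) -> (G = 0 \/ D <= G) ->
  exists a b c : int, a + b + c = 1 /\ t = a *: p + b *: q + c *: r.
Proof.
move=> IH p q r t A B G Sp Sq Sr St hd sum Bd Et hA hB hG fB fG; rewrite /bnd in Bd.
have [b' [c' [b'0 [c'0 [bc [kb kc]]]]]] : exists b' c' : int,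
    0 <= b' /\ 0 <= c' /\ b' + c' = 2 /\ B <= (- A) * b' /\ G <= (- A) * c'.
  case: (lerP B (- A)) => h1; case: (lerP G (- A)) => h2.
  - by exists 1, 1; rewrite !mulr1; lia.
  - by exists 0, 2; rewrite mulr0; lia.
  - by exists 2, 0; rewrite mulr0; lia.
  - lia.
have ec : c' = 2 - b' by lia.
pose y := p + b' *: (q - p) + c' *: (r - p).
have nq := S_nonneg HT Sq; have nr := S_nonneg HT Sr; have nt := S_nonneg HT St.
have ny : nonneg y.
  apply: (@nonneg_comb _ (- A) [:: (t, D); (q, (- A) * b' - B); (r, (- A) * c' - G)]).
  - lia.
  - by move=> z /inl3 [->|[->|->]] /=; split=> //; lia.
  rewrite !big_cons big_nil /y ec; apply/matrixP => i j.
  have := entry Et i j; rewrite !mxE /= => h; lia.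
have Sy : S y.
  apply: (@move_S _ _ HT p [:: (q, b'); (r, c')]) => //.
  - by move=> z /inl2 [->|->].
  - by rewrite !big_cons big_nil addr0 addrA.
  - rewrite !big_cons big_nil /=; lia.
  - rewrite !big_cons big_nil /=; lia.
have dy : det y q r = - det p q r by rewrite /y ec /Submission.det !mxE; ring.
have e : (- A) * b' + (- A) * c' = (- A) * 2 by rewrite -mulrDr bc.
have [a [b [c [s1 E1]]]] : exists a b c : int, a + b + c = 1 /\ t = a *: y + b *: q + c *: r.
  apply: (IH y q r t (- A) (B - (- A) * b') (G - (- A) * c') Sy Sq Sr St).
  - by rewrite dy abszN.
  - lia.
  - rewrite /bnd; lia.
  - rewrite Et /y ec; apply/matrixP => i j; rewrite !mxE /=; ring.
have e2 : a * b' + a * c' = a * 2 by rewrite -mulrDr bc.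
exists (- a), (b + a * b'), (c + a * c'); split; first lia.
by rewrite E1 /y ec; apply/matrixP => i j; rewrite !mxE /=; ring.
Qed.

Lemma SPB1 n : SAP n -> forall p q r t (A B G : int), S p -> S q -> S r -> S t ->
  `|det p q r|%N = Dmin -> A + B + G = D -> bnd D n.+1%:Z A B G ->
  D *: t = A *: p + B *: q + G *: r -> B <= - D -> G <= - D -> - G + D <= - B ->
  exists a b c : int, a + b + c = 1 /\ t = a *: p + b *: q + c *: r.
Proof.
move=> IH p q r t A B G Sp Sq Sr St hd sum Bd Et hB hG hBG; rewrite /bnd in Bd.
pose y := p + (-1) *: (q - p).
have nq := S_nonneg HT Sq; have nr := S_nonneg HT Sr; have nt := S_nonneg HT St.
have ny : nonneg y.
  apply: (@nonneg_comb _ A [:: (q, 2 * (- B) - A); (r, 2 * (- G)); (t, 2 * D)]).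
  - lia.
  - by move=> z /inl3 [->|[->|->]] /=; split=> //; lia.
  rewrite !big_cons big_nil /y; apply/matrixP => i j.
  have := entry Et i j; rewrite !mxE /= => h; lia.
have Sy : S y.
  apply: (@move_S _ _ HT p [:: (q, -1)]) => //.
  - by move=> z /inl1 ->.
  - by rewrite !big_cons big_nil addr0.
  - rewrite !big_cons big_nil /=; lia.
  - rewrite !big_cons big_nil /=; lia.
have dy : det p y r = - det p q r by rewrite /y /Submission.det !mxE; ring.
have [a [b [c [s1 E1]]]] : exists a b c : int, a + b + c = 1 /\ t = a *: p + b *: y + c *: r.
  apply: (IH p y r t (A + 2 * B) (- B) G Sp Sy Sr St).
  - by rewrite dy abszN.
  - lia.
  - rewrite /bnd; lia.
  - rewrite Et /y; apply/matrixP => i j; rewrite !mxE /=; ring.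
exists (a + 2 * b), (- b), c; split; first lia.
by rewrite E1 /y; apply/matrixP => i j; rewrite !mxE /=; ring.
Qed.

Lemma SPB3 n : SAP n -> forall p q r t (A B G : int), S p -> S q -> S r -> S t ->
  `|det p q r|%N = Dmin -> A + B + G = D -> bnd D n.+1%:Z A B G ->
  D *: t = A *: p + B *: q + G *: r -> B <= - D -> G <= - D -> - G < - B + D -> - B < - G + D ->
  exists a b c : int, a + b + c = 1 /\ t = a *: p + b *: q + c *: r.
Proof.
move=> IH p q r t A B G Sp Sq Sr St hd sum Bd Et hB hG h1 h2; rewrite /bnd in Bd.
pose z := q + 1 *: (t - q) + 1 *: (r - q) + (-2) *: (p - q).
have nq := S_nonneg HT Sq; have nr := S_nonneg HT Sr; have nt := S_nonneg HT St.
have nz : nonneg z.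
  apply: (@nonneg_comb _ A [:: (t, A - 2 * D); (q, A + 2 * B); (r, A + 2 * G)]).
  - lia.
  - by move=> w /inl3 [->|[->|->]] /=; split=> //; lia.
  rewrite !big_cons big_nil /z; apply/matrixP => i j.
  have := entry Et i j; rewrite !mxE /= => h; lia.
have Sz : S z.
  apply: (@move_S _ _ HT q [:: (t, 1); (r, 1); (p, -2)]) => //.
  - by move=> w /inl3 [->|[->|->]].
  - by rewrite !big_cons big_nil addr0 !addrA.
  - rewrite !big_cons big_nil /=; lia.
  - rewrite !big_cons big_nil /=; lia.
have [a [b [c [s1 E1]]]] : exists a b c : int, a + b + c = 1 /\ z = a *: p + b *: q + c *: r.
  apply: (IH p q r z (A - 2 * D) (B + D) (G + D) Sp Sq Sr Sz hd).
  - lia.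
  - rewrite /bnd; lia.
  - apply/matrixP => i j; have := entry Et i j; rewrite /z !mxE /= => h; lia.
exists (a + 2), (b - 1), (c - 1); split; first lia.
apply/matrixP => i j; have := entry E1 i j; rewrite /z !mxE /= => h; lia.
Qed.

Lemma SPB n : SAP n -> forall p q r t (A B G : int), S p -> S q -> S r -> S t ->
  `|det p q r|%N = Dmin -> A + B + G = D -> bnd D n.+1%:Z A B G ->
  D *: t = A *: p + B *: q + G *: r -> B <= - D -> G <= - D ->
  exists a b c : int, a + b + c = 1 /\ t = a *: p + b *: q + c *: r.
Proof.
move=> IH p q r t A B G Sp Sq Sr St hd sum Bd Et hB hG.
case: (lerP (- G + D) (- B)) => h1; first exact: (SPB1 IH Sp Sq Sr St hd sum Bd Et hB hG h1).
case: (lerP (- B + D) (- G)) => h2.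
  have [a [b [c [s1 E1]]]] : exists a b c : int, a + b + c = 1 /\ t = a *: p + b *: r + c *: q.
    apply: (SPB1 IH Sp Sr Sq St (A := A) (B := G) (G := B)).
    - by rewrite det_abs23.
    - lia.
    - by move: Bd; rewrite /bnd; lia.
    - by rewrite Et; apply/matrixP => i j; rewrite !mxE /=; ring.
    - exact: hG.
    - exact: hB.
    - exact: h2.
  exists a, c, b; split; first lia.
  by rewrite E1; apply/matrixP => i j; rewrite !mxE /=; ring.
exact: (SPB3 IH Sp Sq Sr St hd sum Bd Et hB hG h2 h1).
Qed.

Lemma SA n : SAP n.
Proof.
elim: n => [|n IH] p q r t A B G Sp Sq Sr St hd sum Bd Et.
  by move: Bd; rewrite /bnd; lia.
have fA : A = 0 \/ A <= - D \/ D <= A.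
  apply: NNPP => H; apply: (small Sp Sq Sr St hd sum Et); lia.
have fB : B = 0 \/ B <= - D \/ D <= B.
  apply: NNPP => H; apply: (small Sq Sp Sr St (A := B) (B := A) (G := G)).
  - by rewrite det_abs12.
  - lia.
  - by rewrite Et; apply/matrixP => i j; rewrite !mxE /=; ring.
  - lia.
  - lia.
  - lia.
have fG : G = 0 \/ G <= - D \/ D <= G.
  apply: NNPP => H; apply: (small Sr Sq Sp St (A := G) (B := B) (G := A)).
  - by rewrite det_abs13.
  - lia.
  - by rewrite Et; apply/matrixP => i j; rewrite !mxE /=; ring.
  - lia.
  - lia.
  - lia.
case: (ltrP A 0) => a0; case: (ltrP B 0) => b0; case: (ltrP G 0) => c0.
- lia.
- have [a [b [c [s1 E1]]]] : exists a b c : int, a + b + c = 1 /\ t = a *: r + b *: p + c *: q.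
    apply: (SPB IH Sr Sp Sq St (A := G) (B := A) (G := B)).
    + by rewrite det_abs312.
    + lia.
    + by move: Bd; rewrite /bnd; lia.
    + by rewrite Et; apply/matrixP => i j; rewrite !mxE /=; ring.
    + lia.
    + lia.
  exists b, c, a; split; first lia.
  by rewrite E1; apply/matrixP => i j; rewrite !mxE /=; ring.
- have [a [b [c [s1 E1]]]] : exists a b c : int, a + b + c = 1 /\ t = a *: q + b *: p + c *: r.
    apply: (SPB IH Sq Sp Sr St (A := B) (B := A) (G := G)).
    + by rewrite det_abs12.
    + lia.
    + by move: Bd; rewrite /bnd; lia.
    + by rewrite Et; apply/matrixP => i j; rewrite !mxE /=; ring.
    + lia.
    + lia.
  exists b, a, c; split; first lia.
  by rewrite E1; apply/matrixP => i j; rewrite !mxE /=; ring.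
- apply: (SPA IH Sp Sq Sr St hd sum Bd Et); lia.
- apply: (SPB IH Sp Sq Sr St hd sum Bd Et); lia.
- have [a [b [c [s1 E1]]]] : exists a b c : int, a + b + c = 1 /\ t = a *: q + b *: p + c *: r.
    apply: (SPA IH Sq Sp Sr St (A := B) (B := A) (G := G)).
    + by rewrite det_abs12.
    + lia.
    + by move: Bd; rewrite /bnd; lia.
    + by rewrite Et; apply/matrixP => i j; rewrite !mxE /=; ring.
    + lia.
    + lia.
    + lia.
    + lia.
    + lia.
  exists b, a, c; split; first lia.
  by rewrite E1; apply/matrixP => i j; rewrite !mxE /=; ring.
- have [a [b [c [s1 E1]]]] : exists a b c : int, a + b + c = 1 /\ t = a *: r + b *: p + c *: q.
    apply: (SPA IH Sr Sp Sq St (A := G) (B := A) (G := B)).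
    + by rewrite det_abs312.
    + lia.
    + by move: Bd; rewrite /bnd; lia.
    + by rewrite Et; apply/matrixP => i j; rewrite !mxE /=; ring.
    + lia.
    + lia.
    + lia.
    + lia.
    + lia.
  exists b, c, a; split; first lia.
  by rewrite E1; apply/matrixP => i j; rewrite !mxE /=; ring.
have [[eA [eB eG]]|[[eA [eB eG]]|[eA [eB eG]]]] :
   (A = D /\ B = 0 /\ G = 0) \/ (A = 0 /\ B = D /\ G = 0) \/ (A = 0 /\ B = 0 /\ G = D) by lia.
- exists 1, 0, 0; split=> //; apply/matrixP => i j; apply: (mulfI Dnz).
  have := entry Et i j; rewrite eA eB eG !mxE /= => h; lia.
- exists 0, 1, 0; split=> //; apply/matrixP => i j; apply: (mulfI Dnz).
  have := entry Et i j; rewrite eA eB eG !mxE /= => h; lia.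
- exists 0, 0, 1; split=> //; apply/matrixP => i j; apply: (mulfI Dnz).
  have := entry Et i j; rewrite eA eB eG !mxE /= => h; lia.
Qed.

End SA.

Section Off.
Variable d : nat.
Variable T : vec d -> Prop.
Variable c : vec d.

Definition Off (w : vec d) := exists l : seq (vec d * int),
  (forall z, z \in l -> T z.1) /\ w = \sum_(z <- l) z.2 *: (z.1 - c).

Lemma Off0 : Off 0.
Proof. by exists [::]; split=> //; rewrite big_nil. Qed.

Lemma OffD w1 w2 : Off w1 -> Off w2 -> Off (w1 + w2).
Proof.
move=> [l1 [H1 ->]] [l2 [H2 ->]]; exists (l1 ++ l2); split; last by rewrite big_cat.
by move=> z; rewrite mem_cat => /orP [/H1|/H2].
Qed.

Lemma OffZ k w : Off w -> Off (k *: w).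
Proof.
move=> [l [H ->]]; exists (map (fun z => (z.1, k * z.2)) l); split.
  by move=> z /mapP [z' z'l ->] /=; exact: H.
by rewrite big_map scaler_sumr; apply: eq_bigr => z _ /=; rewrite scalerA.
Qed.

Lemma OffB w1 w2 : Off w1 -> Off w2 -> Off (w1 - w2).
Proof. by move=> h1 h2; apply: OffD h1 _; rewrite -scaleN1r; apply: OffZ. Qed.

Lemma OffT x : T x -> Off (x - c).
Proof.
by move=> Tx; exists [:: (x, 1)]; split; [move=> z /inl1 -> | rewrite big_cons big_nil scale1r addr0].
Qed.

Lemma Off_sum (I : eqType) (s : seq I) (F : I -> vec d) :
  (forall i, i \in s -> Off (F i)) -> Off (\sum_(i <- s) F i).
Proof.
elim: s => [|i s IH] H; first by rewrite big_nil; exact: Off0.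
rewrite big_cons; apply: OffD; first by apply: H; rewrite mem_head.
by apply: IH => j js; apply: H; rewrite inE js orbT.
Qed.

Lemma rep_Off G x g s m : (forall y, G y -> Off (y - c)) -> rep G x g s m -> Off (x - c).
Proof.
move=> HG [Gg us Hs ->].
have -> : g + \sum_(a <- s) m a *: (a - g) - c =
          (g - c) + \sum_(a <- s) m a *: ((a - c) - (g - c)).
  rewrite addrAC; congr (_ + _); apply: eq_bigr => a _; congr (_ *: _).
  by rewrite opprB addrA subrK.
apply: OffD; first exact: HG.
apply: Off_sum => a as_; apply: OffZ; apply: OffB; last exact: HG.
by apply: HG; case: (Hs a as_).
Qed.

Lemma Lambda_Off x : Lambda T x -> Off (x - c).
Proof. by move=> [g [s [m R]]]; apply: rep_Off R => y; apply: OffT. Qed.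

Lemma Off_Lambda x : T c -> Off (x - c) -> Lambda T x.
Proof.
move=> Tc [l [Hl E]]; have [s [m [us Hs Es _ _]]] := normalize Tc Hl.
by exists c, s, m; split=> //; rewrite Es -E addrC subrK.
Qed.

Lemma S_Off x : T c -> S T x -> Off (x - c).
Proof.
move=> Tc [k]; rewrite /It; elim: k x => [|k IH] x /=; first exact: OffT.
by move=> [_ _ [g [s [m [R _]]]]]; apply: rep_Off R.
Qed.
End Off.

Section Plane.
Variable d : nat.
Variables (i0 j0 : 'I_d) (c u v : vec d).
Definition P1 (w : vec d) := w 0 i0 * v 0 j0 - w 0 j0 * v 0 i0.
Definition P2 (w : vec d) := u 0 i0 * w 0 j0 - u 0 j0 * w 0 i0.
Definition del := u 0 i0 * v 0 j0 - u 0 j0 * v 0 i0.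
Definition InPl (w : vec d) := forall e, del * w 0 e = P1 w * u 0 e + P2 w * v 0 e.

Lemma InPl0 : InPl 0.
Proof. by move=> e; rewrite /P1 /P2 !mxE; ring. Qed.

Lemma InPlD w1 w2 : InPl w1 -> InPl w2 -> InPl (w1 + w2).
Proof.
move=> h1 h2 e; have := h1 e; have := h2 e; rewrite /P1 /P2 !mxE => e2 e1.
rewrite mulrDr e1 e2; ring.
Qed.

Lemma InPlZ k w : InPl w -> InPl (k *: w).
Proof. by move=> h e; rewrite mxE mulrCA h /P1 /P2 !mxE; ring. Qed.

Lemma Off_InPl T : (forall x, T x -> InPl (x - c)) -> forall w, Off T c w -> InPl w.
Proof.
move=> H w [l [Hl ->]]; elim: l Hl => [|z l IH] Hl; first by rewrite big_nil; exact: InPl0.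
rewrite big_cons; apply: InPlD.
  by apply: InPlZ; apply: H; apply: Hl; rewrite mem_head.
by apply: IH => y yl; apply: Hl; rewrite inE yl orbT.
Qed.

Lemma cramer p q r t : del != 0 -> InPl (p - c) -> InPl (q - c) -> InPl (r - c) -> InPl (t - c) ->
  det i0 j0 p q r *: t = (det i0 j0 p q r - det i0 j0 p t r - det i0 j0 p q t) *: p
     + det i0 j0 p t r *: q + det i0 j0 p q t *: r.
Proof.
move=> dn Hp Hq Hr Ht; apply/rowP => e.
have := Hp e; have := Hq e; have := Hr e; have := Ht e; rewrite !mxE => ht hr hq hp.
apply: (mulfI dn).
set D := det i0 j0 p q r; set B := det i0 j0 p t r; set G := det i0 j0 p q t.
have key : del * (D * t 0 e) - del * ((D - B - G) * p 0 e + B * q 0 e + G * r 0 e) =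
   D * (del * (t 0 e - c 0 e)) - (D - B - G) * (del * (p 0 e - c 0 e))
   - B * (del * (q 0 e - c 0 e)) - G * (del * (r 0 e - c 0 e)) by ring.
rewrite ht hp hq hr in key.
apply/eqP; rewrite -subr_eq0 key.
by rewrite /D /B /G /Submission.det /P1 /P2 !mxE; apply/eqP; ring.
Qed.
End Plane.

Lemma colmx_entry d (W : 'M[rat]_(1, 1 + 1)) (U V : 'rV[rat]_d) e :
  (W *m col_mx U V) 0 e = W 0 0 * U 0 e + W 0 1 * V 0 e.
Proof.
rewrite !mxE big_ord_recl big_ord1 !mxE.
case: splitP => [i _|i Hi]; last by move: Hi => /eqP; rewrite eq_sym addn_eq0.
case: splitP => [i' Hi'|i' _].
  by have := ltn_ord i'; rewrite -Hi'.
by rewrite !ord1; congr (W 0 _ * _ + W 0 _ * _); apply/val_inj.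
Qed.

Lemma minor_nz d (U V : 'rV[rat]_d) : \rank (col_mx U V) = 2%N ->
  exists i j, U 0 i * V 0 j - U 0 j * V 0 i != 0.
Proof.
move=> hr; apply: NNPP => H.
have H' : forall i j, U 0 i * V 0 j = U 0 j * V 0 i.
  move=> i j; apply/eqP; rewrite -subr_eq0; apply: NNPP => /negP hn; apply: H; exists i, j; exact: hn.
have : (\rank (col_mx U V) <= 1)%N.
  case: (eqVneq U 0) => [U0|Un].
    apply: leq_trans (rank_leq_row V); apply: mxrankS.
    by rewrite col_mx_sub U0 sub0mx submx_refl.
  have [i Ui] : exists i, U 0 i != 0.
    apply: NNPP => H2; move/eqP: Un; apply; apply/rowP => k; rewrite mxE.
    by apply: NNPP => h; apply: H2; exists k; apply/eqP.
  have -> : V = (V 0 i / U 0 i) *: U.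
    apply/rowP => k; rewrite mxE; have h := H' i k.
    by rewrite mulrAC [V 0 i * _]mulrC -h mulrAC divff // mul1r.
  apply: leq_trans (rank_leq_row U); apply: mxrankS.
  by rewrite col_mx_sub submx_refl scalemx_sub // submx_refl.
by rewrite hr.
Qed.

Lemma T_InPl d (i0 j0 : 'I_d) (a b c x : vec d) :
  (ratv x - ratv c <= col_mx (ratv a - ratv c) (ratv b - ratv c))%MS ->
  InPl i0 j0 (a - c) (b - c) (x - c).
Proof.
move=> /submxP [W EW] e.
have key : forall k, (x 0 k)%:~R = (c 0 k)%:~R + W 0 0 * ((a 0 k)%:~R - (c 0 k)%:~R)
     + W 0 1 * ((b 0 k)%:~R - (c 0 k)%:~R) :> rat.
  move=> k; have := congr1 (fun M : 'M[rat]_(1,d) => M 0 k) EW; rewrite /= colmx_entry !mxE => h; lra.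
apply/eqP; rewrite -(eqr_int rat); apply/eqP.
rewrite /del /P1 /P2 !mxE !(intrD, intrM, intrB, mulrNz) !key; ring.
Qed.

Lemma min_ex (P : nat -> Prop) m : P m -> exists n, P n /\ forall k, P k -> (n <= k)%N.
Proof.
elim/ltn_ind: m => m IH Pm.
case: (classic (exists k, P k /\ (k < m)%N)) => [[k [Pk km]]|H]; first exact: IH km Pk.
exists m; split=> // k Pk; rewrite leqNgt; apply/negP => km; by apply: H; exists k.
Qed.

Lemma lemma3p5_aux (d : nat) (T : vec d -> Prop) :
  (3 <= d)%N ->
  (forall x, T x -> nonneg x) ->
  affdim2 T ->
  forall l : vec d, Einf 2%N T l <-> (Lambda T l /\ nonneg l).
Proof.
move=> _ HT [c [a [b [Tc Ta Tb hr hsp]]]] l.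
have [i0 [j0 hij]] := minor_nz hr.
have delnz : del i0 j0 (a - c) (b - c) != 0.
  have E : (ratv a - ratv c) 0 i0 * (ratv b - ratv c) 0 j0
        - (ratv a - ratv c) 0 j0 * (ratv b - ratv c) 0 i0
        = (del i0 j0 (a - c) (b - c))%:~R :> rat.
    by rewrite /del !mxE !(intrD, intrM, intrB, mulrNz); ring.
  by move: hij; rewrite E intr_eq0.
have InT : forall x, T x -> InPl i0 j0 (a - c) (b - c) (x - c).
  by move=> x Tx; apply: T_InPl; apply: hsp.
have InS : forall x, S T x -> InPl i0 j0 (a - c) (b - c) (x - c).
  by move=> x Sx; apply: (Off_InPl InT); apply: S_Off Tc Sx.
split.
  move=> [k [k0 Hk]]; split; last exact: (It_nonneg HT Hk).
  by apply: (Off_Lambda Tc); apply: S_Off Tc _; exists k.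
move=> [Ll nl].
pose P := fun n : nat => exists p q r, [/\ S T p, S T q, S T r,
   det i0 j0 p q r != 0 & `|det i0 j0 p q r|%N = n].
have P0 : P (absz (del i0 j0 (a - c) (b - c))).
  have ed : det i0 j0 c a b = del i0 j0 (a - c) (b - c) by rewrite /det /del !mxE.
  by rewrite /P; exists c, a, b; split; rewrite ?ed //; apply: S_T.
have [Dmin [[p [q [r [Sp Sq Sr dn hd]]]] Hm]] := min_ex P0.
have Hmin : forall p q r, S T p -> S T q -> S T r -> det i0 j0 p q r != 0 ->
    (Dmin <= `|det i0 j0 p q r|)%N.
  by move=> p' q' r' Sp' Sq' Sr' dn'; apply: Hm; exists p', q', r'.
have Dpos : (0 < Dmin)%N by rewrite -hd absz_gt0.
have coords : forall x, S T x -> exists al be ga : int, al + be + ga = 1 /\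
    x = al *: p + be *: q + ga *: r.
  move=> x Sx.
  have E := cramer delnz (InS p Sp) (InS q Sq) (InS r Sr) (InS x Sx).
  set D0 := det i0 j0 p q r in E dn hd.
  set B0 := det i0 j0 p x r in E.
  set G0 := det i0 j0 p q x in E.
  have [eD|eD] : D0 = Dmin%:Z \/ D0 = - Dmin%:Z by lia.
  - rewrite eD in E.
    apply: (@SA d T HT i0 j0 Dmin Dpos Hmin (absz (Dmin%:Z - B0 - G0)%R + absz B0 + absz G0 + Dmin)%N
       p q r x (Dmin%:Z - B0 - G0) B0 G0 Sp Sq Sr Sx hd) => //.
    + lia.
    + rewrite /bnd; lia.
  - apply: (@SA d T HT i0 j0 Dmin Dpos Hmin (absz (D0 - B0 - G0)%R + absz B0 + absz G0 + Dmin)%N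
       p q r x (- (D0 - B0 - G0)) (- B0) (- G0) Sp Sq Sr Sx hd).
    + lia.
    + rewrite /bnd; lia.
    + apply/matrixP => i j; have := entry E i j; rewrite !mxE eD => h; rewrite -[Dmin%:Z * _]opprK -mulNr h; ring.
have [ac [bc [cc [sc Ec]]]] := coords c (S_T Tc).
have sumco : forall w : seq (vec d * int), (forall z, z \in w -> T z.1) ->
    exists al be ga : int, al + be + ga = 0 /\
    \sum_(z <- w) z.2 *: (z.1 - c) = al *: p + be *: q + ga *: r.
  elim=> [|z w IH] Hw.
    by exists 0, 0, 0; rewrite big_nil !scale0r !addr0.
  have [|al [be [ga [s E]]]] := IH.
    by move=> y yw; apply: Hw; rewrite inE yw orbT.
  have [al1 [be1 [ga1 [s1 E1]]]] := coords z.1 (S_T (Hw z (mem_head _ _))).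
  exists (z.2 * (al1 - ac) + al), (z.2 * (be1 - bc) + be), (z.2 * (ga1 - cc) + ga); split.
    have e : z.2 * (al1 - ac) + z.2 * (be1 - bc) + z.2 * (ga1 - cc) =
             z.2 * ((al1 + be1 + ga1) - (ac + bc + cc)) by ring.
    rewrite s1 sc subrr mulr0 in e; lia.
  rewrite big_cons E E1 Ec; apply/matrixP => i j; rewrite !mxE /=; ring.
have [w [Hw Ew]] := Lambda_Off c Ll.
have [al [be [ga [s E]]]] := sumco w Hw.
have Sl : S T l.
  apply: (@ML d T HT (absz (al + ac)%R + absz (be + bc)%R + absz (ga + cc)%R).+1 p q r
            (al + ac) (be + bc) (ga + cc) l Sp Sq Sr) => //.
  - lia.
  - rewrite /bnd; lia.
  - have -> : l = c + (l - c) by rewrite addrC subrK.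
    rewrite Ew E Ec; apply/matrixP => i j; rewrite !mxE /=; ring.
case: Sl => k Hk; exists k.+1; split=> //.
exact: (It_succ HT Hk).
Qed.

Local Close Scope ring_scope.
Unset Implicit Arguments.

Theorem lemma3p5 (d : nat) (T : vec d -> Prop) :
  (3 <= d)%N ->
  (forall x, T x -> nonneg x) ->
  affdim2 T ->
  forall l : vec d, Einf 2 T l <-> (Lambda T l /\ nonneg l).
Proof. exact: lemma3p5_aux. Qed.
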